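(* Let $x\in\mathbb{R}$ be irrational and suppose there are $\alpha\in(0,1)$ and a sequence of rational numbers $(p_j/q_j)_{j\ge1}$ (with $p_j\in\mathbb{Z}$, $q_j\in\mathbb{N}$) with $\lim_{j\to\infty}q_j=+\infty$ such that $\left|x-\frac{p_j}{q_j}\right|\le\alpha^{q_j}$ for each $j\in\mathbb{N}$. Let $r=e^{i2\pi x}$ and $\varphi_r(z)=rz$ for $z\in\mathbb{D}$. Then $1\in\sigma(C_{\varphi_r}, H_0(\mathbb{D}))$.
   Context: $\mathbb{D}$ is the open unit disc; $H_0(\mathbb{D})$ is the Fréchet space of analytic functions $f$ on $\mathbb{D}$ with $f(0)=0$, with the topology of uniform convergence on compact subsets; $C_{\varphi_r}f=f\circ\varphi_r$. For a continuous linear operator $T$ on a Fréchet space $X$, $\sigma(T;X)$ is the set of $\lambda\in\mathbb{C}$ such that $\lambda I-T$ is not a bijection with continuous inverse. *)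

(* Defs.v *)
From HB Require Import structures.
From mathcomp Require Import all_boot all_order all_algebra.
From mathcomp Require Import all_classical all_reals all_analysis.
From mathcomp Require Import complex.
Import Order.TTheory GRing.Theory Num.Theory.
Import numFieldNormedType.Exports.

Set Implicit Arguments.
Unset Strict Implicit.
Unset Printing Implicit Defensive.

Local Open Scope classical_set_scope.
Local Open Scope ring_scope.
Local Open Scope complex_scope.

Section Defs.
Variable R : realType.
Local Notation C := R[i].

Definition udisc : set C := [set z | `|z| < 1].

(* Complex differentiability at z (the scalar field of C^o is C itself). *)
Definition cdiff (f : C -> C) (z : C) : Prop := derivable (f : C^o -> C^o) z 1.

(* H_0(D): analytic (= holomorphic) functions on D vanishing at 0.
   Functions on D are represented by functions C -> C extended by 0 outside D,
   so that each element of H_0(D) has a unique representative. *)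
Definition H0 : set (C -> C) :=
  [set f | (forall z, udisc z -> cdiff f z) /\ f 0 = 0 /\
           (forall z, ~ udisc z -> f z = 0)].

Definition cptD : set (set C) := [set K : set C^o | compact K /\ K `<=` udisc].

(* The Frechet space H_0(D) is H0 with the (subspace) topology of
   {family cptD, C^o -> C^o}. *)
Definition HT := {family cptD, C^o -> C^o}.

Definition spectrum_H0 (T : (C -> C) -> (C -> C)) : set C :=
  [set lam | ~ exists S : (C -> C) -> (C -> C),
      (forall g, H0 g -> H0 (S g)) /\
      (forall f, H0 f -> S (lam *: f - T f) = f) /\
      (forall g, H0 g -> lam *: S g - T (S g) = g) /\
      {within (H0 : set HT), continuous (S : HT -> HT)}].

Definition phi (r : C) (z : C) : C := r * z.
Definition Cphi (r : C) (f : C -> C) : C -> C :=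
  fun z => if `|z| < 1 then f (phi r z) else 0.

Definition expi (x : R) : C := (cos (2 * pi * x)) +i* (sin (2 * pi * x)).

End Defs.

(* Main.v *)
Require Import Defs.
From HB Require Import structures.
From mathcomp Require Import all_boot all_order all_algebra.
From mathcomp Require Import all_classical all_reals all_analysis.
From mathcomp Require Import complex.
From mathcomp Require Import ring lra.
Import Order.TTheory GRing.Theory Num.Theory.
Import numFieldNormedType.Exports.
Local Open Scope classical_set_scope.
Local Open Scope ring_scope.
Local Open Scope complex_scope.

Section S.
Variable R : realType.
Local Notation C := R[i].

Lemma expiD (a b : R) : expi (a + b) = expi a * expi b.
Proof.
rewrite /expi mulrDr cosD sinD; apply/eqP; rewrite eq_complex /=.
apply/andP; split; apply/eqP; ring.
Qed.

Lemma expi0 : expi (0:R) = 1.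
Proof. by rewrite /expi mulr0 cos0 sin0. Qed.

Lemma expiX (a : R) n : expi a ^+ n = expi (a *+ n).
Proof.
elim: n => [|n IH]; first by rewrite expr0 mulr0n expi0.
by rewrite exprS IH mulrS expiD.
Qed.

Lemma expi_nat n : expi (n%:R : R) = 1.
Proof.
rewrite /expi.
have -> : 2 * pi * (n%:R : R) = 0 + (pi *+ 2) *+ n.
  by rewrite add0r -mulr_natl -[in RHS]mulr_natl mulr_natl; ring.
by rewrite (periodicn (@cosD2pi R)) (periodicn (@sinD2pi R)) cos0 sin0.
Qed.

Lemma expi_int (k : int) : expi (k%:~R : R) = 1.
Proof.
case: k => n; first by rewrite expi_nat.
have h := expiD (- (n.+1%:R)) (n.+1%:R).
rewrite addNr expi0 expi_nat mulr1 in h.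
by rewrite NegzE mulrNz h.
Qed.

Lemma lip (f df : R -> R) : (forall x : R, is_derive x (1:R) f (df x)) ->
  (forall x, `|df x| <= 1) -> continuous f ->
  forall a b, `|f b - f a| <= `|b - a|.
Proof.
move=> fd dfb fc.
suff H : forall a b, a <= b -> `|f b - f a| <= `|b - a|.
  move=> a b; case: (leP a b) => ab; first exact: H.
  by rewrite distrC [`|b - a|]distrC; apply: H; rewrite ltW.
move=> a b ab.
have [c _ ->] := MVT_segment ab (fun x _ => fd x) (continuous_subspaceT fc).
by rewrite normrM ler_piMl.
Qed.

Lemma lip_sin a b : `|sin b - sin a| <= `|b - a| :> R.
Proof. apply: (@lip _ cos) => //; [exact: cos_max | exact: continuous_sin]. Qed.

Lemma lip_cos a b : `|cos b - cos a| <= `|b - a| :> R.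
Proof.
apply: (@lip _ (fun x => - sin x)) => //; last exact: continuous_cos.
by move=> x; rewrite normrN sin_max.
Qed.

End S.

Section S2.
Variable R : realType.
Local Notation C := R[i].
Lemma normc_le (a b : R) : `|a +i* b| <= (`|a| + `|b|)%:C.
Proof.
rewrite normc_def lecR.
change (Num.sqrt (a ^+ 2 + b ^+ 2) <= `|a| + `|b|).
rewrite -(ger0_norm (addr_ge0 (normr_ge0 a) (normr_ge0 b))).
rewrite -sqrtr_sqr ler_wsqrtr // -(real_normK (num_real a)) -(real_normK (num_real b)).
have := normr_ge0 a; have := normr_ge0 b; nra.
Qed.

Lemma normcR (a : R) : `|a%:C| = `|a|%:C.
Proof. by rewrite normc_def /= expr0n addr0 sqrtr_sqr. Qed.

Lemma bound1 (t : R) (k : int) :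
  `|1 - expi t| <= (4 * pi * `|t - k%:~R|)%:C.
Proof.
have -> : expi t = expi (t - k%:~R).
  by have := @expiD R (t - k%:~R) k%:~R; rewrite subrK expi_int mulr1.
set s := t - k%:~R.
have -> : 1 - expi s = (1 - cos (2 * pi * s)) +i* (- sin (2 * pi * s)).
  by apply/eqP; rewrite eq_complex /= sub0r !eqxx.
apply: le_trans (normc_le _ _) _; rewrite lecR normrN.
have h1 := @lip_cos R 0 (2 * pi * s); have h2 := @lip_sin R 0 (2 * pi * s).
rewrite cos0 distrC in h1; rewrite sin0 subr0 in h2.
have -> : 4 * pi * `|s| = `|2 * pi * s| + `|2 * pi * s|.
  rewrite !normrM (ger0_norm (ltW (pi_gt0 R))) (ger0_norm (_ : 0 <= 2)) //; ring.
by rewrite subr0 in h1 h2; apply: lerD.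
Qed.

Lemma bound2 (x : R) (k : int) (n : nat) : (0 < n)%N ->
  `|1 - expi x ^+ n| <= (4 * pi * n%:R * `|x - k%:~R / n%:R|)%:C.
Proof.
move=> n0; rewrite expiX; apply: le_trans (bound1 _ k) _.
rewrite lecR -!mulrA ler_pM2l ?mulr_gt0 ?(pi_gt0 R) //.
have nn : (n%:R : R) != 0 by rewrite pnatr_eq0 -lt0n.
have -> : x *+ n - k%:~R = n%:R * (x - k%:~R / n%:R).
  by rewrite mulrBr mulrCA mulfV // mulr1 mulr_natl.
by rewrite normrM (ger0_norm (ler0n _ n)).
Qed.

Definition monc (c : C) (n : nat) : C -> C :=
  fun z => if `|z| < 1 then c * z ^+ n else 0.

Lemma near_disc (z : C) : `|z| < 1 -> \forall w \near (z : C^o), `|w| < 1.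
Proof.
move=> z1; have : nbhs (z : C^o) (ball (z : C^o) (1 - `|z|)).
  by apply: nbhsx_ballx; rewrite subr_gt0.
apply: filterS => w; rewrite -ball_normE /ball_ /= => h.
have := ler_normD z (w - z); rewrite addrC subrK => h2.
apply: le_lt_trans h2 _; rewrite distrC in h; rewrite -ltrBrDl //.
Qed.

Lemma monc_H0 c n : (0 < n)%N -> H0 (monc c n).
Proof.
move=> n0; split; [|split].
- move=> z zD; rewrite /cdiff.
  apply: (@near_eq_derivable _ _ _ (c \*: (@GRing.exp C ^~ n : C^o -> C^o))).
    move: (near_disc _ zD); apply: filterS => w w1.
    by rewrite /monc w1.
  apply: derivableZ; exact: exprn_derivable.
- by rewrite /monc normr0 ltr01 expr0n eqn0Ngt n0 mulr0.
- by move=> z; rewrite /monc /udisc /= => /negP/negbTE ->.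
Qed.

Lemma norm_expi (x : R) : `|expi x| = 1.
Proof.
rewrite normc_def /=. 
by rewrite cos2Dsin2 sqrtr1.
Qed.

Lemma monc_eq c n (r : C) : `|r| = 1 ->
  (1 : C) *: monc c n - Cphi r (monc c n) = monc ((1 - r ^+ n) * c) n.
Proof.
move=> r1; apply/funext => z; rewrite !fctE.
rewrite /Cphi /monc /phi normrM r1 mul1r.
case: ifP => _; last by rewrite scale1r subr0.
by rewrite scale1r exprMn; ring.
Qed.

Lemma fam_cvg0 (G : nat -> C -> C) (u : nat -> R) :
  (forall e : R, 0 < e -> \forall j \near \oo, u j < e) ->
  (forall j z, `|G j z| <= (u j)%:C) ->
  G @ \oo --> (0 : HT R).
Proof.
move=> hu hG.
apply: (proj2 (@fam_cvgP C^o C^o (@cptD R) (G @ \oo) 0 _)) => K _ P /uniform_nbhs [E [entE sub]].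
move: entE; rewrite -entourage_ballE => -[[a b] e0 Eb].
move: e0; rewrite /= ltcE /= => /andP [/eqP b0 a0]; subst b.
have H : \forall j \near \oo, P (G j); last exact: H.
move: (hu a a0); apply: filterS => j uj; apply: sub => y Ky.
apply: Eb; rewrite /= -ball_normE /=.
rewrite [0 y]/= sub0r normrN (le_lt_trans (hG j y)) // -complexr0 ltcR //.
Qed.

Lemma bern (h : R) n : 0 <= h -> 1 + n%:R * h <= (1 + h) ^+ n.
Proof.
move=> h0; elim: n => [|n IH]; first by rewrite mul0r addr0 expr0.
rewrite exprS -addn1 natrD.
have := ler_wpM2l (addr_ge0 ler01 h0) IH.
have : 0 <= n%:R * h by rewrite mulr_ge0.
nra.
Qed.

Lemma nd_bound (d : R) (n : nat) : 0 < d -> d < 1 ->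
  n%:R * d ^+ n <= (d^-1 - 1)^-1.
Proof.
move=> d0 d1; set h := d^-1 - 1.
have h0 : 0 < h by rewrite /h subr_gt0 invf_gt1.
have dE : d = (1 + h)^-1 by rewrite /h addrC subrK invrK.
have X0 : 0 < (1 + h) ^+ n by rewrite exprn_gt0 // addr_gt0.
rewrite dE exprVn ler_pdivrMr //.
apply: le_trans (_ : h^-1 * (1 + n%:R * h) <= _).
  by rewrite mulrDr mulr1 mulrCA mulVf ?gt_eqF // mulr1 lerDr invr_ge0 ltW.
by apply: ler_wpM2l; [rewrite invr_ge0 ltW | exact: bern (ltW h0)].
Qed.
End S2.

Local Close Scope complex_scope.
Theorem mainTheorem4 (R : realType) (x : R)
  (x_irr : ~ exists q : rat, x = ratr q)
  (alpha : R) (alpha_gt0 : 0 < alpha) (alpha_lt1 : alpha < 1)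
  (p : nat -> int) (q : nat -> nat)
  (q_pos : forall j, (0 < q j)%N)
  (q_oo : ((fun j => (q j)%:R : R) @ \oo --> +oo))
  (approx : forall j, `|x - (p j)%:~R / (q j)%:R| <= alpha ^+ (q j)) :
  spectrum_H0 (Cphi (expi x)) 1.
Proof.
move=> [S [SH0 [Sl [Sr Scont]]]].
set r := expi x.
have r1 : `|r| = 1 := norm_expi R x.
set d : R := (1 + alpha) / 2.
have d0 : 0 < d by rewrite /d; lra.
have d1 : d < 1 by rewrite /d; lra.
set rho : R := alpha / d ^+ 2.
have rho0 : 0 < rho by rewrite /rho divr_gt0 // exprn_gt0.
have rho1 : rho < 1.
  rewrite /rho ltr_pdivrMr ?exprn_gt0 // mul1r /d; nra.
have ard : alpha / rho = d ^+ 2.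
  by rewrite /rho invf_div mulrA mulrC mulrA mulVf ?gt_eqF // mul1r.
set lam := fun j => (((rho ^-1) ^+ q j)%:C)%C.
set F := fun j => monc R (lam j) (q j).
set G := fun j => monc R ((1 - r ^+ q j) * lam j) (q j).
have SG j : S (G j) = F j.
  by rewrite /G -(monc_eq _ _ _ _ r1); apply: Sl; apply: monc_H0.
have Z : monc R 0 1 = 0.
  by apply/funext => z; rewrite /monc mul0r; case: ifP.
have S0 : S 0 = 0.
  have := Sl (monc R 0 1) (monc_H0 _ _ _ (ltn0Sn 0)).
  by rewrite monc_eq // mulr0 Z.
have qq : q @ \oo --> \oo by apply/(@cvgrnyP R).
have dq : (fun j => d ^+ q j) @ \oo --> (0:R).
  apply: (cvg_comp _ _ qq); apply: cvg_expr; rewrite ger0_norm ?ltW //.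
set h := (d^-1 - 1)^-1.
have h0 : 0 < h by rewrite /h invr_gt0 subr_gt0 invf_gt1.
have pi0 : 0 < pi :> R := pi_gt0 R.
have Gcvg : G @ \oo --> (0 : HT R).
  apply: (fam_cvg0 R G (fun j => 4 * pi * h * d ^+ q j)).
  - move=> e e0; have k0 : 0 < 4 * pi * h by rewrite !mulr_gt0.
    have e1 : 0 < e / (4 * pi * h) by rewrite divr_gt0.
    have H := cvgr0_norm_lt (fun j => d ^+ q j) dq _ e1.
    near=> j; rewrite mulrC -ltr_pdivlMr //.
    rewrite -[d ^+ q j]ger0_norm ?exprn_ge0 ?ltW //; near: j; exact: H.
  - move=> j z; rewrite /G /monc; case: ifP => z1; last first.
      by rewrite normr0 lecR !mulr_ge0 ?exprn_ge0 ?(ltW pi0) ?(ltW h0) ?(ltW d0).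
    rewrite !normrM.
    have A : `|1 - r ^+ q j| <= ((4 * pi * (q j)%:R * alpha ^+ q j)%:C)%C.
      apply: le_trans (bound2 R x (p j) (q j) (q_pos j)) _. rewrite (@lecR R).
      by apply: ler_wpM2l; [rewrite !mulr_ge0 ?(ltW pi0) | exact: approx].
    have B : `|lam j| = ((rho^-1 ^+ q j)%:C)%C.
      by rewrite normcR ger0_norm // exprn_ge0 // invr_ge0 ltW.
    have Cz : `|z ^+ q j| <= 1 by rewrite normrX exprn_ile1 // ltW.
    apply: le_trans (_ : ((4 * pi * (q j)%:R * alpha ^+ q j)%:C)%C * ((rho^-1 ^+ q j)%:C)%C * 1 <= _).
      rewrite -B; apply: ler_pM => //.
      by apply: ler_wpM2r.
    rewrite mulr1 -rmorphM lecR.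
    have E : alpha ^+ q j * rho^-1 ^+ q j = d ^+ q j * d ^+ q j.
      by rewrite -exprMn ard -exprM mulnC exprM expr2.
    rewrite -!mulrA E ler_pM2l // ler_pM2l // mulrA.
    by rewrite ler_pM2r ?exprn_gt0 // nd_bound.
have H0G j : H0 (G j) := monc_H0 R _ _ (q_pos j).
have H00 : H0 (0 : R[i] -> R[i]) by rewrite -Z; exact: monc_H0 _ _ _ (ltn0Sn 0).
have Gsub : G @ \oo --> (0 : subspace (@H0 R : set (HT R))).
  move=> P P0.
  have Pw : within (@H0 R : set (HT R)) (nbhs (0 : HT R)) P.
    by rewrite (nbhs_subspace_in H00).
  move: (Gcvg _ Pw) => [N _ HN]; exists N => // k kN.
  exact: HN _ kN (H0G k).
have SGc := cvg_comp G (from_subspace (@H0 R : set (HT R)) S) Gsub (Scont 0).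
have SGc' : F @ \oo --> (0 : HT R).
  have -> : F = from_subspace (@H0 R : set (HT R)) S \o G.
    by apply/funext => j; rewrite /from_subspace /= SG.
  by have := SGc; rewrite /from_subspace /= S0.
have rhoD : `|(rho%:C)%C| < 1 by rewrite normcR ger0_norm ?ltW // ltcR.
have Kc : @cptD R [set (rho%:C)%C].
  by split; [exact: compact_set1 | move=> z ->].
have := proj1 (@fam_cvgP (R[i])^o (R[i])^o (@cptD R) (F @ \oo) 0 _) SGc' _ Kc.
rewrite uniform_set1 => Hpt.
have Hpt' : (fun j => F j (rho%:C)%C) @ \oo --> ((0 : R[i] -> R[i]) (rho%:C)%C : (R[i])^o) := Hpt ltac:(typeclasses eauto).
have [N _ HN] := (@cvgrPdist_lt _ (R[i])^o _ _ _ (fun j => F j (rho%:C)%C) _).1 Hpt' 1 ltr01.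
have := HN N (leqnn N); rewrite /F /monc /= rhoD.
rewrite [0 _]/= sub0r normrN /lam -rmorphXn -rmorphM -exprMn mulVf ?gt_eqF //.
by rewrite expr1n normr1 ltxx.
Unshelve. all: by end_near. Qed.
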